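(* Let $S_1,\dots,S_n$ be i.i.d. samples, $f(x;S)$ a loss, $f_i(x)=f(x;S_i)$, $F(x)=\mathbb{E}[f(x;S)]$, $\bar F(x)=\frac1n\sum_{i=1}^nf_i(x)$. Let $x_0=0,x_1,\dots,x_K$ be candidate models and let $\tau_1,\dots,\tau_K\ge0$ satisfy, for some $\delta\in(0,1)$, \[ \mathbb{P}\big(\exists k\in\{0,\dots,K\}:\ |F(x_k)-\bar F(x_k)-(F(0)-\bar F(0))|>\tau_k\big)\le\delta, \] with $\tau_0:=0$. Let $\gamma\in[1,\infty)$ and let $k_{\mathrm{rely}}$ be the output of the Reliable Model Selection procedure. Then with probability at least $1-\delta$, $F(x_{k_{\mathrm{rely}}})\le F(x_k)+(1+\gamma)\tau_k$ for all $k\in\{0,\dots,K\}$.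
   Context: Reliable Model Selection with parameter $\gamma\in[1,\infty)$, candidates $x_0,\dots,x_K$, samples $f_1,\dots,f_n$ and widths $\tau_1,\dots,\tau_K$ (with $\tau_0:=0$): set $\theta=\min_{k\in\{0,\dots,K\}}\bar F(x_k)+\gamma\tau_k$, set $\mathcal{F}=\{k\in\{0,\dots,K\}:\bar F(x_k)+\tau_k\le\theta\}$, and output $k_{\mathrm{rely}}\in\arg\min_{k\in\mathcal{F}}\bar F(x_k)$. *)

(* Defs.v *)
From HB Require Import structures.
From mathcomp Require Import all_boot all_order all_algebra.
From mathcomp Require Import all_classical all_reals all_analysis.
Set Implicit Arguments. Unset Strict Implicit. Unset Printing Implicit Defensive.
Import Order.TTheory GRing.Theory Num.Theory.
Local Open Scope classical_set_scope.
Local Open Scope ring_scope.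

Definition iid_samples {d dS : measure_display} {Omega : measurableType d}
  {Sd : measurableType dS} {R : realType} (P : probability Omega R) (n : nat)
  (S : 'I_n -> Omega -> Sd) : Prop :=
  [/\ (forall i, measurable_fun setT (S i)),
      (forall i j (A : set Sd), measurable A ->
          P (S i @^-1` A) = P (S j @^-1` A)) &
      (forall (J : {set 'I_n}) (A : 'I_n -> set Sd),
          (forall j, measurable (A j)) ->
          P (\bigcap_(j in [set j | j \in J]) S j @^-1` A j) =
          (\prod_(j in J) P (S j @^-1` A j))%E)].

Definition Fbar {Omega Sd X : Type} {R : realType} (n : nat)
  (f : X -> Sd -> R) (S : 'I_n -> Omega -> Sd) (x : X) (omega : Omega) : R :=
  n%:R^-1 * \sum_(i < n) f x (S i omega).

(* Reliable Model Selection, given the empirical risks Fb k = \bar F(x_k)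
   and widths tau k (tau ord0 = 0). *)
Definition rms_theta {R : realType} (K : nat) (gamma : R)
  (Fb tau : 'I_K.+1 -> R) : R :=
  \big[Num.min/Fb ord0 + gamma * tau ord0]_(k < K.+1) (Fb k + gamma * tau k).

Definition rms_feasible {R : realType} (K : nat) (gamma : R)
  (Fb tau : 'I_K.+1 -> R) (k : 'I_K.+1) : Prop :=
  Fb k + tau k <= rms_theta gamma Fb tau.

Definition rms_output {R : realType} (K : nat) (gamma : R)
  (Fb tau : 'I_K.+1 -> R) (k : 'I_K.+1) : Prop :=
  rms_feasible gamma Fb tau k /\
  forall j, rms_feasible gamma Fb tau j -> Fb k <= Fb j.

(* Main.v *)
Require Import Defs.
From HB Require Import structures.
From mathcomp Require Import all_boot all_order all_algebra.
From mathcomp Require Import all_classical all_reals all_analysis.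
Import Order.TTheory GRing.Theory Num.Theory.
Local Open Scope classical_set_scope.
Local Open Scope ring_scope.

From mathcomp Require Import lra.
Import measurable_realfun.

Theorem lemma1 (R : realType) (d : measure_display) (Omega : measurableType d)
  (P : probability Omega R) (dS : measure_display) (Sd : measurableType dS)
  (X : zmodType) (n : nat) (S : 'I_n -> Omega -> Sd) (f : X -> Sd -> R)
  (F : X -> R) (K : nat) (x : 'I_K.+1 -> X) (tau : 'I_K.+1 -> R)
  (delta gamma : R) (krely : Omega -> 'I_K.+1) :
  iid_samples P S ->
  (forall z, measurable_fun setT (f z)) ->
  (forall z i, F z = fine ('E_P[fun w => f z (S i w)])) ->
  x ord0 = 0 ->
  tau ord0 = 0 ->
  (forall k, 0 <= tau k) ->
  0 < delta < 1 ->
  (P [set w | exists k : 'I_K.+1,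
       (tau k < `|F (x k) - Fbar f S (x k) w - (F 0 - Fbar f S 0 w)|)%R ] <= delta%:E)%E ->
  1 <= gamma ->
  (forall w, rms_output gamma (fun k => Fbar f S (x k) w) tau (krely w)) ->
  exists E : set Omega, [/\ measurable E, ((1 - delta)%:E <= P E)%E &
    forall w, E w -> forall k : 'I_K.+1,
      F (x (krely w)) <= F (x k) + (1 + gamma) * tau k].
Proof.
move=> [mS _ _] mf _ x0 tau0 tau_ge0 _ HP g1 Hout.
set B := [set w | exists k : 'I_K.+1,
       (tau k < `|F (x k) - Fbar f S (x k) w - (F 0 - Fbar f S 0 w)|)%R ].
fold B in HP.
have mFb : forall z, measurable_fun setT (Fbar f S z).
  move=> z; rewrite /Fbar; apply: measurable_funM; first exact: measurable_cst.
  apply: measurable_sum => i; exact: measurableT_comp (mf z) (mS i).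
have mB : measurable B.
  have -> : B = \bigcup_(k in [set: 'I_K.+1])
      ((fun w => `|F (x k) - Fbar f S (x k) w - (F 0 - Fbar f S 0 w)|) @^-1`
        `]tau k, +oo[).
    apply/seteqP; split => w /=.
      by move=> [k Hk]; exists k => //=; rewrite in_itv /= Hk.
    by move=> [k _]; rewrite /= in_itv /= andbT => Hk; exists k.
  apply: fin_bigcup_measurable; first exact: finite_finset.
  move=> k _; rewrite -[_ @^-1` _]setTI.
  apply: (_ : measurable_fun setT _) => //.
  apply: measurableT_comp => //; apply: measurable_funB.
    apply: measurable_funB => //; exact: measurable_cst.
  apply: measurable_funB => //; exact: measurable_cst.
exists (~` B); split.
- exact: measurableC.
- rewrite probability_setC //.
  have fB : P B \is a fin_num by rewrite ge0_fin_numE // (le_lt_trans (probability_le1 P mB)) // ltry.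
  rewrite -(fineK fB) -EFinB lee_fin lerB //.
  by rewrite -lee_fin fineK.
- move=> w Bw k.
  have Hb : forall j, `|F (x j) - Fbar f S (x j) w - (F 0 - Fbar f S 0 w)| <= tau j.
    by move=> j; rewrite leNgt; apply/negP => Hj; apply: Bw; exists j.
  case: (Hout w) => Hfeas _.
  move: Hfeas; rewrite /rms_feasible => Hfeas.
  have Ht : rms_theta gamma (fun k => Fbar f S (x k) w) tau <=
            Fbar f S (x k) w + gamma * tau k by exact: bigmin_le.
  have := Hb (krely w); have := Hb k.
  rewrite !ler_norml => /andP[Hk1 Hk2] /andP[Hr1 Hr2].
  have Htk := tau_ge0 k.
  move: Hfeas Ht Hk1 Hk2 Hr1 Hr2 Htk.
  rewrite /rms_theta.
  set th := \big[_/_]__ _.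
  move: th (Fbar f S (x k) w) (Fbar f S (x (krely w)) w) (Fbar f S 0 w)
    (F (x k)) (F (x (krely w))) (F 0) (tau k) (tau (krely w)).
  move=> th a b c p q r t1 t2 H1 H2 H3 H4 H5 H6 H7.
  lra.
Qed.
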